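(* Let $R$ be a commutative strongly purified ring. Then $R$ is a purified ring, and every pure ideal of $R$ is a regular ideal.
   Context: A regular ideal is an ideal generated by a set of idempotents. $R$ is strongly purified if for each $f\in R$ there is $n\geq1$ such that $\operatorname{Ann}(f^n)$ is a regular ideal. $R$ is purified if for any distinct minimal prime ideals $\mathfrak p,\mathfrak q$ of $R$ there is an idempotent $e\in\mathfrak p$ with $1-e\in\mathfrak q$. An ideal $I$ is pure if for each $f\in I$ there is $g\in I$ with $f(1-g)=0$. *)

(* Defs.v *)
From mathcomp Require Import all_boot all_algebra.
Set Implicit Arguments. Unset Strict Implicit. Unset Printing Implicit Defensive.
Import GRing.Theory.
Local Open Scope ring_scope.

Section Defs.
Variable R : comPzRingType.

Definition subsetR (A B : R -> Prop) : Prop := forall x, A x -> B x.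

Definition is_ideal (I : R -> Prop) : Prop :=
  [/\ I 0, (forall x y, I x -> I y -> I (x + y)) & (forall r x, I x -> I (r * x))].

Definition idempotent (e : R) : Prop := e * e = e.

Definition ideal_gen (S : R -> Prop) : R -> Prop :=
  fun x => forall J, is_ideal J -> subsetR S J -> J x.

Definition regular_ideal (I : R -> Prop) : Prop :=
  exists S : R -> Prop, (forall e, S e -> idempotent e) /\
    (forall x, I x <-> ideal_gen S x).

Definition Ann (f : R) : R -> Prop := fun x => x * f = 0.

Definition strongly_purified : Prop :=
  forall f : R, exists n : nat, (1 <= n)%N /\ regular_ideal (Ann (f ^+ n)).

Definition prime_ideal (P : R -> Prop) : Prop :=
  [/\ is_ideal P, ~ P 1 & forall a b, P (a * b) -> P a \/ P b].

Definition minimal_prime (P : R -> Prop) : Prop :=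
  prime_ideal P /\ forall Q, prime_ideal Q -> subsetR Q P -> subsetR P Q.

(* distinct = not equal as sets of elements *)
Definition purified : Prop :=
  forall p q : R -> Prop, minimal_prime p -> minimal_prime q ->
    ~ (forall x, p x <-> q x) ->
    exists e : R, idempotent e /\ p e /\ q (1 - e).

Definition pure_ideal (I : R -> Prop) : Prop :=
  forall f, I f -> exists g, I g /\ f * (1 - g) = 0.

End Defs.

(* Main.v *)
From Pilot Require Import Defs.
From mathcomp Require Import all_boot all_algebra.
From mathcomp Require Import ring.
From Stdlib Require Import Classical.
Import Pilot.Defs.
Set Implicit Arguments.
Import GRing.Theory.
Local Open Scope ring_scope.

Section Aux.
Variable R : comPzRingType.

Lemma reg_idem {I : R -> Prop} {x} : regular_ideal I -> I x ->
  exists e, idempotent e /\ I e /\ x * e = x.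
Proof.
move=> [S [HS HI]] Ix.
have gx := (proj1 (HI x) Ix).
pose J := fun y => exists e, idempotent e /\ ideal_gen S e /\ y * e = y.
have JI : is_ideal J.
  split.
  - exists 0; split; first by rewrite /idempotent mulr0.
    split; last by rewrite mulr0.
    by move=> K [K0 _ _] _.
  - move=> a b [e1 [i1 [g1 h1]]] [e2 [i2 [g2 h2]]].
    exists (e1 + e2 - e1 * e2); split.
      rewrite /idempotent in i1 i2 *.
      have -> : (e1 + e2 - e1 * e2) * (e1 + e2 - e1 * e2) =
        (e1 * e1) + (e2 * e2) + (e1 * e1) * (e2 * e2) + e1 * e2 + e1 * e2
         - (e1 * e1) * e2 - (e1 * e1) * e2 - e1 * (e2 * e2) - e1 * (e2 * e2) by ring.
      rewrite i1 i2; ring.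
    split.
      move=> K IK KS; have k1 := g1 K IK KS; have k2 := g2 K IK KS.
      case: IK => K0 KD KM.
      have -> : e1 + e2 - e1 * e2 = e1 + (e2 + (-1) * (e1 * e2)) by ring.
      apply: (KD) => //; apply: (KD) => //; apply: (KM); rewrite mulrC; exact: (KM).
    have -> : (a + b) * (e1 + e2 - e1 * e2) =
       a * e1 + b * e2 + (a * e1) * e2 * (-1) + a * e2 + b * e1 - (b * e2) * e1
         by ring.
    rewrite h1 h2; ring.
  - move=> r y [e [i [g h]]]; exists e; split => //; split => //.
    by rewrite -mulrA h.
have := gx J JI.
have SJ : subsetR S J.
  move=> e Se; exists e; split; first exact: HS.
  split; last exact: HS.
  by move=> K _ KS; apply: KS.
move=> /(_ SJ) [e [ie [ge he]]].
exists e; split => //; split => //; by apply/HI.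
Qed.

Lemma ideal_sub_pow {I : R -> Prop} {g} : is_ideal I -> I g ->
  forall y n, I (y - y * (1 - g) ^+ n).
Proof.
move=> [I0 ID IM] Ig y; elim=> [|n IH].
  by rewrite expr0 mulr1 subrr.
rewrite exprSr.
have -> : y - y * ((1 - g) ^+ n * (1 - g)) =
   (y - y * (1 - g) ^+ n) + y * (1 - g) ^+ n * g by ring.
by apply: ID => //; apply: IM.
Qed.

Lemma binom_ann (y z : R) : forall N a k l, (k + l = N)%N ->
  a * y ^+ k = 0 -> a * z ^+ l = 0 -> a * (y + z) ^+ N = 0.
Proof.
elim=> [|N IH] a k l E ha hb.
  by case: k E ha => // _; rewrite expr0 mulr1 => ->; rewrite mul0r.
case: k E ha => [|k] E ha.
  by move: ha; rewrite expr0 mulr1 => ->; rewrite mul0r.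
case: l E hb => [|l] E hb.
  by move: hb; rewrite expr0 mulr1 => ->; rewrite mul0r.
rewrite exprS mulrA mulrDr mulrDl.
have h1 : a * y * (y + z) ^+ N = 0.
  apply: (IH _ k l.+1).
  - by move: E; rewrite addSn => -[].
  - by rewrite -mulrA -exprS.
  - by rewrite mulrC mulrA (mulrC _ a) hb mul0r.
have h2 : a * z * (y + z) ^+ N = 0.
  apply: (IH _ k.+1 l).
  - by move: E; rewrite addnS => -[].
  - by rewrite mulrC mulrA (mulrC _ a) ha mul0r.
  - by rewrite -mulrA -exprS.
by rewrite h1 h2 addr0.
Qed.

Lemma pow_mem {P : R -> Prop} {x k} : prime_ideal P -> P (x ^+ k) -> P x.
Proof.
move=> [[P0 PD PM] P1 Pp]; elim: k => [|k IH].
  by rewrite expr0 => /P1.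
rewrite exprS => /Pp [] //.
Qed.

Lemma pow_nmem (P : R -> Prop) x k : prime_ideal P -> ~ P x -> ~ P (x ^+ k).
Proof. by move=> pP nx /(pow_mem pP). Qed.

Definition Qp (P : R -> Prop) : R -> Prop :=
  fun y => exists s k, ~ P s /\ s * y ^+ k = 0.

Lemma Qp_prime {P : R -> Prop} : strongly_purified R -> prime_ideal P ->
  prime_ideal (Qp P) /\ subsetR (Qp P) P.
Proof.
move=> sp pP; have [[P0 PD PM] P1 Pp] := pP.
have nmul : forall a b, ~ P a -> ~ P b -> ~ P (a * b).
  by move=> a b na nb /Pp [].
split; last first.
  move=> y [s [k [ns h]]].
  have : P (s * y ^+ k) by rewrite h.
  by move=> /Pp [] // /(pow_mem pP).
split.
- split.
  + by exists 1, 1%N; split => //; rewrite mulr0.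
  + move=> a b [s [k [ns hs]]] [t [l [nt ht]]].
    exists (s * t), (k + l)%N; split; first exact: nmul.
    eapply binom_ann; [exact: (erefl (k + l)%N)| |].
      by rewrite mulrAC hs mul0r.
    by rewrite -mulrA ht mulr0.
  + move=> r y [s [k [ns hs]]]; exists s, k; split => //.
    by rewrite exprMn mulrCA hs mulr0.
- move=> [s [k [ns hs]]]; apply: ns; move: hs; rewrite expr1n mulr1 => ->; exact: P0.
- move=> a b [s [k [ns hs]]].
  case: (classic (Qp P a)) => [|na]; [by left|right].
  have [n [n1 rg]] := sp (a ^+ k).
  have ann : Ann (a ^+ k ^+ n) (s * b ^+ k).
    rewrite /Ann; case: n n1 {rg} => // n _.
    have hh : s * b ^+ k * a ^+ k = 0 by rewrite -mulrA -exprMn (mulrC b) hs.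
    by rewrite exprS mulrA hh mul0r.
  have [e [ie [he hse]]] := reg_idem rg ann.
  have Pe : P e.
    apply: NNPP => ne; apply: na; exists e, (k * n)%N; split => //.
    by move: he; rewrite /Ann -exprM.
  exists (s * (1 - e)), k; split.
    apply: nmul => // P1e; apply: P1.
    have -> : (1 : R) = e + (1 - e) by ring.
    exact: PD.
  by rewrite mulrAC mulrBr mulr1 hse subrr.
Qed.

End Aux.

Theorem theorem5p10 (R : comPzRingType) :
  strongly_purified R ->
  purified R /\
  (forall I : R -> Prop, is_ideal I -> pure_ideal I -> regular_ideal I).
Proof.
move=> sp; split.
- move=> p q [pp mp] [pq mq] ne.
  have nsub : ~ subsetR p q.
    move=> spq; apply: ne => x; split; first exact: spq.
    exact: (mq p pp spq).
  have [x nx] := not_all_ex_not _ _ nsub.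
  have [px nqx] := imply_to_and _ _ nx.
  have [Qpr Qsub] := Qp_prime sp pp.
  have [s [k [ns hs]]] := mp _ Qpr Qsub x px.
  have [n [n1 rg]] := sp (x ^+ k).
  have ann : Ann (x ^+ k ^+ n) s.
    rewrite /Ann; case: n n1 {rg} => // n _.
    by rewrite exprS mulrA hs mul0r.
  have [e [ie [he hse]]] := reg_idem rg ann.
  have [[p0 pD pM] p1 pP] := pp.
  have [[q0 qD qM] q1 qP] := pq.
  have npe : ~ p e by move=> pe; apply: ns; rewrite -hse; exact: pM.
  have qe : q e.
    have : q (e * x ^+ k ^+ n) by rewrite he.
    by case/qP => // /(pow_mem pq) /(pow_mem pq).
  have p1e : p (1 - e).
    have : p (e * (1 - e)) by rewrite mulrBr mulr1 ie subrr.
    by case/pP.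
  exists (1 - e); split.
    rewrite /idempotent /idempotent in ie *.
    by rewrite mulrBr mulr1 mulrBl mul1r ie subrr subr0.
  by split => //; rewrite opprB addrC subrK.
- move=> I II pI.
  exists (fun e => idempotent e /\ I e); split; first by move=> e [].
  move=> x; split.
    move=> Ix; have [g [Ig hg]] := pI x Ix.
    have [n [n1 rg]] := sp (1 - g).
    have ann : Ann ((1 - g) ^+ n) x.
      rewrite /Ann; case: n n1 {rg} => // n _.
      by rewrite exprS mulrA hg mul0r.
    have [e [ie [he hxe]]] := reg_idem rg ann.
    have Ie : I e.
      have := ideal_sub_pow II Ig e n.
      by move: he; rewrite /Ann => ->; rewrite subr0.
    move=> J [J0 JD JM] JS.
    rewrite -hxe; apply: JM; exact: JS.
  move=> g; apply: g => //; by move=> e [].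
Qed.
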